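(* Given an integer $l\ge0$, there exists a constant $c>0$ such that for all integers $n\le cN$ and all $k\ge1$, $$\int_{kT/2}^\infty dx\,(\psi_n(x))^2x^l=(\nu_1(N))^k,$$ where $T=\sqrt{2\pi N}$.
   Context: $\psi_n(x)=(2^nn!\sqrt\pi)^{-1/2}e^{-x^2/2}H_n(x)$ is the $n$-th Hermite function ($H_n$ the physicists' Hermite polynomial). $N\ge4$ is an integer (the dimension of the discrete system), and statements are asymptotic in $N$. $\nu_1(N)$ denotes a quantity that is $\exp(-\Omega(N))$, i.e., there is a constant $\beta>0$ such that it is at most $e^{-\beta N}$ for sufficiently large $N$. *)

(* Defs.v *)
From HB Require Import structures.
From mathcomp Require Import all_boot all_order all_algebra.
From mathcomp Require Import all_classical all_reals all_analysis.
Set Implicit Arguments. Unset Strict Implicit. Unset Printing Implicit Defensive.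
Import Order.TTheory GRing.Theory Num.Theory.
Local Open Scope ring_scope.

(* Physicists' Hermite polynomials via the standard recurrence
   H_0 = 1, H_1 = 2X, H_{n+2} = 2X H_{n+1} - 2(n+1) H_n.
   hermite_pair n = (H_n, H_{n+1}). *)
Fixpoint hermite_pair (R : nzRingType) (n : nat) : {poly R} * {poly R} :=
  match n with
  | 0%N => (1, 2%:R *: 'X)
  | m.+1 => let: (a, b) := hermite_pair R m in
            (b, 2%:R *: 'X * b - (2 * m.+1)%N%:R *: a)
  end.

Definition hermite (R : nzRingType) (n : nat) : {poly R} := (hermite_pair R n).1.

Definition hermite_fun (R : realType) (n : nat) (x : R) : R :=
  (Num.sqrt ((2 ^ n * n`!)%N%:R * Num.sqrt pi))^-1 * expR (- (x ^+ 2) / 2)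
  * (hermite R n).[x].

Definition Tper (R : realType) (N : nat) : R := Num.sqrt (2 * pi * N%:R).

(* Main.v *)
Require Import Defs.
From HB Require Import structures.
From mathcomp Require Import all_boot all_order all_algebra.
From mathcomp Require Import all_classical all_reals all_analysis.
From mathcomp Require Import lra zify ring measurable_realfun normal_distribution.
Import Order.TTheory GRing.Theory Num.Theory.
Local Open Scope ring_scope.
Local Open Scope classical_set_scope.

Lemma hermite0 (R : nzRingType) : hermite R 0 = 1. Proof. by []. Qed.
Lemma hermite1 (R : nzRingType) : hermite R 1 = 2%:R *: 'X. Proof. by []. Qed.
Lemma hermiteSS (R : nzRingType) m : hermite R m.+2 =
  2%:R *: 'X * hermite R m.+1 - (2 * m.+1)%N%:R *: hermite R m.
Proof. by rewrite /hermite /=; case: hermite_pair. Qed.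

Lemma herm_bound (R : realType) (x : R) : 0 <= x -> forall m : nat,
  2 * (m.+1)%:R <= 3 * x ^+ 2 ->
  `|(hermite R m).[x]| <= (3 * x) ^+ m /\ `|(hermite R m.+1).[x]| <= (3 * x) ^+ m.+1.
Proof.
move=> x0; elim=> [|m IH] H.
  rewrite hermite0 hermite1 !hornerE expr0 expr1 normr1; split => //.
  rewrite ger0_norm; lra.
have Hm : 2 * (m.+1)%:R <= 3 * x ^+ 2.
  apply: le_trans H; rewrite ler_wpM2l // ler_nat; lia.
have [IH1 IH2] := IH Hm.
split => //.
rewrite hermiteSS !hornerE.
have h1 : 0 <= (3*x)^+m by apply: exprn_ge0; lra.
set A := (hermite R m).[x] in IH1 *; set B := (hermite R m.+1).[x] in IH2 *.
have -> : (3 * x) ^+ m.+2 = (3*x)^+m * (9 * x^+2) by rewrite !exprS; ring.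
rewrite -natrM in Hm.
set c := ((2 * m.+1)%N%:R : R) in Hm *.
have c0 : 0 <= c by apply: ler0n.
rewrite exprSr in IH2.
set P := (3 * x) ^+ m in h1 IH1 IH2 *.
have -> : (2%:R * x * B - c * A) = (2 * x) * B + (- c) * A by rewrite mulNr.
apply: (le_trans (ler_normD _ _)); have n1 : `|2 * x| = 2 * x by apply: ger0_norm; lra.
have n2 : `|c| = c by apply: ger0_norm.
rewrite !normrM normrN n2 (ger0_norm x0) normr_nat.
have t1 : 2 * x * `|B| <= 2 * x * (P * (3 * x)) by apply: ler_wpM2l => //; lra.
have t2 : c * `|A| <= c * P by apply: ler_wpM2l.
have t3 : c * P <= 3 * x ^+ 2 * P by apply: ler_wpM2r.
have -> : P * (9 * x ^+ 2) = 2 * x * (P * (3 * x)) + 3 * x ^+ 2 * P by ring.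
lra.
Qed.

Lemma pow_le_fact_exp (R : realType) (z : R) n : 0 <= z -> z ^+ n <= n`!%:R * expR z.
Proof.
move=> z0; case: n => [|m].
  rewrite expr0 fact0 mul1r; have := expR_ge1Dx z; lra.
have := expR_ge1Dxn m z0.
have f0 : 0 < (m.+1)`!%:R :> R by rewrite ltr0n fact_gt0.
move=> h; have : z ^+ m.+1 / (m.+1)`!%:R <= expR z by lra.
by rewrite ler_pdivrMr // mulrC.
Qed.

Lemma hf_sq (R : realType) n (x : R) : hermite_fun n x ^+ 2 =
  expR (- x ^+ 2) * ((hermite R n).[x]) ^+ 2 / ((2 ^ n * n`!)%N%:R * Num.sqrt pi).
Proof.
rewrite /hermite_fun !exprMn exprVn sqr_sqrtr; last first.
  by apply: mulr_ge0; [apply: ler0n| apply: sqrtr_ge0].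
rewrite -expRM_natl.
have -> : (2%:R * (- x ^+ 2 / 2)) = - x ^+ 2 :> R by field.
ring.
Qed.

Lemma pt (R : realType) n l (a x : R) : 8 <= a -> a <= x -> 32 * n%:R <= a ^+ 2 ->
  hermite_fun n x ^+ 2 * x ^+ l <= l`!%:R * expR (- (a ^+ 2) / 8) * expR (- (x ^+ 2) / 8).
Proof.
move=> a8 ax an.
have x0 : 0 <= x by lra.
have xa2 : a ^+ 2 <= x ^+ 2 by nra.
have n0 : 0 <= n%:R :> R by apply: ler0n.
have [Hb _] : _ := @herm_bound R x x0 n ltac:(rewrite -addn1 natrD; nra).
set H := (hermite R n).[x] in Hb *.
have H2 : H ^+ 2 <= (3 ^+ 2) ^+ n * (x ^+ 2) ^+ n.
  rewrite -exprMn -exprMn -exprM mulnC exprM -real_normK ?num_real //.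
  rewrite !expr2; apply: ler_pM => //.
set K := ((2 ^ n * n`!)%N%:R : R).
have K0 : 0 < K by rewrite ltr0n muln_gt0 expn_gt0 fact_gt0.
have X2 : (x ^+ 2) ^+ n <= K * expR (x ^+ 2 / 2).
  have := @pow_le_fact_exp R (x ^+ 2 / 2) n ltac:(nra).
  move=> h.
  have -> : (x ^+ 2) ^+ n = 2 ^+ n * (x ^+ 2 / 2) ^+ n.
    by rewrite -exprMn; congr (_ ^+ _); field.
  rewrite /K natrM natrX -mulrA; apply: ler_wpM2l => //.
have sp : 1 <= Num.sqrt pi :> R.
  by rewrite -sqrtr1 ler_sqrt ?pi_ge0 //; have := @pi_ge2 R; lra.
have E0 : 0 <= expR (- x ^+ 2) by apply: expR_ge0.
have Hf : hermite_fun n x ^+ 2 <= (3 ^+ 2) ^+ n * expR (- (x ^+ 2) / 2).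
  rewrite hf_sq ler_pdivrMr; last by apply: mulr_gt0 => //; lra.
  have p9 : 0 <= (3 ^+ 2) ^+ n :> R by apply: exprn_ge0.
  have s1 : expR (- x ^+ 2) * H ^+ 2 <= expR (- x ^+ 2) * ((3 ^+ 2) ^+ n * (K * expR (x ^+ 2 / 2))).
    apply: ler_wpM2l => //; apply: le_trans H2 _; apply: ler_wpM2l => //.
  apply: le_trans s1 _.
  have -> : expR (- x ^+ 2) * ((3 ^+ 2) ^+ n * (K * expR (x ^+ 2 / 2))) =
     (3 ^+ 2) ^+ n * expR (- (x ^+ 2) / 2) * K.
    have -> : expR (- (x ^+ 2) / 2) = expR (- x ^+ 2) * expR (x ^+ 2 / 2).
      by rewrite -expRD; congr expR; field.
    ring.
  rewrite -[X in X <= _]mulr1 -mulrA; apply: ler_wpM2l.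
    by apply: mulr_ge0 => //; apply: expR_ge0.
  have : K * 1 <= K * Num.sqrt pi by apply: ler_wpM2l => //; lra.
  by rewrite mulr1.
have e1 : 2 <= expR 1 :> R by have := @expR_ge1Dx R 1; lra.
have X9 : (3 ^+ 2) ^+ n <= expR (n%:R * 4) :> R.
  rewrite expRM_natl; apply: lerXn2r; rewrite ?nnegrE ?exprn_ge0 ?expR_ge0 //.
  have -> : (4 : R) = 4%:R * 1 by rewrite mulr1.
  rewrite expRM_natl.
  have : 2 ^+ 4 <= expR 1 ^+ 4 :> R by apply: lerXn2r; rewrite ?nnegrE ?expR_ge0 //.
  have -> : (2 ^+ 4 : R) = 16 by rewrite !exprS expr0; lra.
  rewrite !exprS expr0 mulr1; lra.
have Xl : x ^+ l <= l`!%:R * expR x by apply: pow_le_fact_exp.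
have s1 : hermite_fun n x ^+ 2 * x ^+ l <=
   (expR (n%:R * 4) * expR (- (x ^+ 2) / 2)) * (l`!%:R * expR x).
  apply: ler_pM => //; [exact: sqr_ge0 | exact: exprn_ge0|].
  apply: le_trans Hf _; apply: ler_wpM2r => //; exact: expR_ge0.
apply: le_trans s1 _.
have -> : expR (n%:R * 4) * expR (- (x ^+ 2) / 2) * (l`!%:R * expR x) =
  l`!%:R * expR (n%:R * 4 + (- (x ^+ 2) / 2) + x) by rewrite !expRD; ring.
rewrite -mulrA -expRD; apply: ler_wpM2l => //; rewrite ler_expR.
nra.
Qed.

Lemma meas_f (R : realType) n l : measurable_fun [set: R] (fun x => hermite_fun n x ^+ 2 * x ^+ l).
Proof.
apply: measurable_funM; apply: measurable_funX; last exact: measurable_id.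
rewrite /hermite_fun; apply: measurable_funM.
  apply: measurable_funM; first exact: measurable_cst.
  apply: measurableT_comp; first exact: measurable_expR.
  apply: measurable_funM; last exact: measurable_cst.
  apply: measurableT_comp; first exact: measurable_funN.
  apply: measurable_funX; exact: measurable_id.
have h := @continuous_measurable_fun R _ (@continuous_horner R (hermite R n)).
exact: h.
Qed.

Lemma pdf2 (R : realType) (x : R) :
  normal_pdf 0 2 x = (Num.sqrt (2 ^+ 2 * pi *+ 2))^-1 * expR (- (x ^+ 2) / 8).
Proof.
have h2 : ((2:R) == 0) = false by rewrite pnatr_eq0.
rewrite /normal_pdf h2 /normal_peak /normal_fun subr0.
congr (_ * expR _).
congr (_ / _); rewrite -mulr_natr; lra.
Qed.

Theorem lemma1 (R : realType) (l : nat) :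
  exists c : R, 0 < c /\
  exists beta : R, 0 < beta /\
  exists N0 : nat, forall N : nat, (4 <= N)%N -> (N0 <= N)%N ->
  forall n : nat, n%:R <= c * N%:R ->
  forall k : nat, (1 <= k)%N ->
  (\int[@lebesgue_measure R]_(x in `[(k%:R * Tper R N / 2)%R, +oo[)
      ((hermite_fun n x) ^+ 2 * x ^+ l)%:E
   <= ((expR (- (beta * N%:R))) ^+ k)%:E)%E.
Proof.
exists (1/32); split; first lra.
exists (1/16); split; first lra.
exists (96 * l`! + 64)%N => N _ NN0 n hn k k1.
set a := k%:R * Tper R N / 2.
have pi2 := @pi_ge2 R.
have N64 : 64%:R <= N%:R :> R by rewrite ler_nat; lia.
have Nl : (96 * l`!)%N%:R <= N%:R :> R by rewrite ler_nat; lia.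
rewrite natrM in Nl.
have k1' : 1%:R <= k%:R :> R by rewrite ler_nat.
have a2 : a ^+ 2 = k%:R ^+ 2 * (2 * pi * N%:R) / 4.
  rewrite /a /Tper !exprMn sqr_sqrtr; first field.
  by [].
  apply: mulr_ge0; [lra | exact: ler0n].
have a0 : 0 <= a.
  rewrite /a; apply: mulr_ge0; last lra.
  apply: mulr_ge0; [exact: ler0n | exact: sqrtr_ge0].
have kN : k%:R * N%:R <= a ^+ 2.
  rewrite a2.
  have kk : k%:R <= k%:R ^+ 2 :> R by rewrite expr2; nra.
  have N0' : 0 <= N%:R :> R by apply: ler0n.
  have h1 : k%:R * N%:R <= k%:R ^+ 2 * N%:R :> R by apply: ler_wpM2r.
  have h2 : k%:R ^+ 2 * N%:R <= k%:R ^+ 2 * N%:R * (pi / 2) :> R.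
    rewrite -[X in X <= _]mulr1; apply: ler_wpM2l; [|lra].
    by apply: mulr_ge0 => //; apply: exprn_ge0; lra.
  apply: (le_trans h1); apply: (le_trans h2).
  have -> : k%:R ^+ 2 * N%:R * (pi / 2) = k%:R ^+ 2 * (2 * pi * N%:R) / 4 :> R by field.
  by [].
have a8 : 8 <= a by nra.
have an : 32 * n%:R <= a ^+ 2 by nra.
set s8 := Num.sqrt (2 ^+ 2 * pi *+ 2) : R.
set C := l`!%:R * expR (- (a ^+ 2) / 8) * s8.
have s80 : 0 < s8.
  rewrite /s8 sqrtr_gt0; apply: mulrn_wgt0 => //; apply: mulr_gt0; lra.
have C0 : 0 <= C.
  rewrite /C; apply: mulr_ge0; last lra; apply: mulr_ge0; [exact: ler0n| exact: expR_ge0].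
have mD : measurable (`[a, +oo[ : set R) by exact: measurable_itv.
have pw : forall x, `[a, +oo[%classic x ->
    hermite_fun n x ^+ 2 * x ^+ l <= C * normal_pdf 0 2 x.
  move=> x; rewrite /= in_itv /= andbT => ax.
  rewrite pdf2 -/s8.
  have s8n : s8 != 0 by rewrite gt_eqF.
  have -> : C * (s8^-1 * expR (- x ^+ 2 / 8)) = l`!%:R * expR (- (a ^+ 2) / 8) * expR (- x ^+ 2 / 8).
    by rewrite /C; field.
  exact: pt.
have mg : measurable_fun [set: R] (fun x => C * normal_pdf 0 2 x).
  apply: measurable_funM; [exact: measurable_cst | exact: measurable_normal_pdf].
have mf : measurable_fun [set: R] (fun x => hermite_fun n x ^+ 2 * x ^+ l) by exact: meas_f.
have pdf0 : forall x, (0 <= C * normal_pdf 0 2 x) by move=> x; apply: mulr_ge0 => //; exact: normal_pdf_ge0.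
have I1 : (\int[@lebesgue_measure R]_(x in `[a, +oo[) ((hermite_fun n x) ^+ 2 * x ^+ l)%:E <= \int[@lebesgue_measure R]_(x in `[a, +oo[) (C * normal_pdf 0 2 x)%:E)%E.
  apply: ge0_le_integral => //.
  - move=> x; rewrite /= in_itv /= andbT => ax; rewrite lee_fin.
    apply: mulr_ge0; [exact: sqr_ge0| apply: exprn_ge0; lra].
  - apply/measurable_EFinP; exact: (measurable_funS measurableT (subsetT _) mf).
  - apply/measurable_EFinP; exact: (measurable_funS measurableT (subsetT _) mg).
apply: (Order.POrderTheory.le_trans I1).
have I2 : (\int[@lebesgue_measure R]_(x in `[a, +oo[) (C * normal_pdf 0 2 x)%:E <= \int[@lebesgue_measure R]_(x in [set: R]) (C * normal_pdf 0 2 x)%:E)%E.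
  apply: ge0_subset_integral => //.
  - by apply/measurable_EFinP.
  - by move=> x _; rewrite lee_fin.
apply: (Order.POrderTheory.le_trans I2).
under eq_integral do rewrite EFinM.
rewrite ge0_integralZl //; last first.
  - by move=> x _; rewrite lee_fin; exact: normal_pdf_ge0.
  - by apply/measurable_EFinP; exact: measurable_normal_pdf.
rewrite integral_normal_pdf mule1 lee_fin.
rewrite -expRM_natl /C.
have s86 : s8 <= 6.
  have : s8 ^+ 2 = 2 ^+ 2 * pi *+ 2 by rewrite sqr_sqrtr // mulrn_wge0 // mulr_ge0 //; lra.
  have := @pihalf_02 R; rewrite -mulr_natr => hp h; nra.
have eN : N%:R / 16 <= expR (N%:R / 16) :> R by have := @expR_ge1Dx R (N%:R / 16); lra.
have -> : expR (k%:R * - (1 / 16 * N%:R)) = expR (- (a ^+ 2) / 8) * expR (a ^+ 2 / 8 - k%:R * N%:R / 16).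
  by rewrite -expRD; congr expR; field.
have lf : 1 <= l`!%:R :> R by rewrite (_ : 1 = 1%:R) // ler_nat fact_gt0.
have E1 : expR (N%:R / 16) <= expR (a ^+ 2 / 8 - k%:R * N%:R / 16).
  rewrite ler_expR; nra.
have Ea : 0 < expR (- (a ^+ 2) / 8) by apply: expR_gt0.
rewrite mulrAC -mulrA mulrA [X in _ <= X]mulrC; apply: ler_wpM2r; first exact: ltW.
have : l`!%:R * s8 <= l`!%:R * 6 by apply: ler_wpM2l => //; lra.
lra.
Qed.
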